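(* Let $X$ be a quasi-Banach rearrangement invariant space on $\mathbb{R}$ and let $p>0$. Then there exist a number $0<u\le p$ and a constant $c$ such that for every $n$ and all $f_1,\dots,f_n\in X$, $$\Big\|\Big(\sum_{i=1}^n|f_i|^p\Big)^{1/p}\Big\|_X\le c\Big(\sum_{i=1}^n\|f_i\|_X^u\Big)^{1/u}.$$
   Context: For measurable $f$, $f^*(s)=\sup\{t:\text{measure}\{|f|>t\}>s\}$. A rearrangement invariant (r.i.) space $X$ on $\mathbb{R}$ is a set of measurable functions (modulo a.e. equality) with a complete quasi-norm $\|\cdot\|_X$ such that: (1) if $g^*\le f^*$ and $f\in X$ then $g\in X$ and $\|g\|_X\le\|f\|_X$; (2) every simple function with support of finite measure is in $X$; (3) either $f_n\searrow 0$ implies $\|f_n\|_X\searrow 0$, or $0\le f_n\nearrow f$ with $\sup_n\|f_n\|_X<\infty$ implies $f\in X$ and $\|f\|_X=\sup_n\|f_n\|_X$. *)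

(* Defs.v *)
From HB Require Import structures.
From mathcomp Require Import all_boot all_order all_algebra.
From mathcomp Require Import all_classical all_reals all_analysis.
Set Implicit Arguments. Unset Strict Implicit. Unset Printing Implicit Defensive.
Import Order.TTheory GRing.Theory Num.Theory numFieldNormedType.Exports.
Local Open Scope classical_set_scope.
Local Open Scope ring_scope.

Definition decr_rearr {R : realType} (f : R -> R) (s : R) : \bar R :=
  ereal_sup [set t%:E | t in
    [set t : R | (s%:E < (lebesgue_measure [set x : R | (t < `|f x|)%R]))%E]].

Definition finsupp_simple {R : realType} (f : R -> R) : Prop :=
  measurable_fun setT f /\ finite_set (range f) /\
  (lebesgue_measure [set x : R | (f x != 0)%R] < +oo)%E.

(* X is a complete quasi-normed space of measurable functions on R
   (elements identified modulo a.e. equality through N) which is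
   rearrangement invariant in the sense of (1),(2),(3). *)
Definition qB_ri_space {R : realType} (X : set (R -> R)) (N : (R -> R) -> R)
  : Prop :=
  (forall f, X f -> measurable_fun setT f) /\
  X (fun _ => 0) /\
  (forall f g, X f -> X g -> X (f \+ g)) /\
  (forall (a : R) f, X f -> X (fun x => a * f x)) /\
  (forall f, X f -> 0 <= N f) /\
  (forall f, X f -> (N f = 0 <-> {ae lebesgue_measure, forall x, f x = 0})) /\
  (forall (a : R) f, X f -> N (fun x => a * f x) = `|a| * N f) /\
  (exists K : R, 1 <= K /\
     forall f g, X f -> X g -> N (f \+ g) <= K * (N f + N g)) /\
  (forall u : nat -> R -> R, (forall n, X (u n)) ->
     (forall e : R, 0 < e -> exists M, forall m n, (M <= m)%N -> (M <= n)%N ->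
         N (u m \- u n) < e) ->
     exists g, X g /\ forall e : R, 0 < e -> exists M, forall n, (M <= n)%N ->
         N (u n \- g) < e) /\
  (* (1) rearrangement invariance / lattice property *)
  (forall f g, X f -> measurable_fun setT g ->
     (forall s : R, 0 < s -> (decr_rearr g s <= decr_rearr f s)%E) ->
     X g /\ N g <= N f) /\
  (forall f, finsupp_simple f -> X f) /\
  (* (3) order continuity or Fatou property *)
  ((forall u : nat -> R -> R, (forall n, X (u n)) ->
      (forall n x, u n.+1 x <= u n x) ->
      (forall x, u n x @[n --> \oo] --> 0) ->
      N (u n) @[n --> \oo] --> 0)
   \/
   (forall (u : nat -> R -> R) (f : R -> R), (forall n, X (u n)) ->
      (forall n x, 0 <= u n x) ->
      (forall n x, u n x <= u n.+1 x) ->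
      (forall x, (fun n => u n x) @ \oo --> f x) ->
      (exists B : R, forall n, N (u n) <= B) ->
      X f /\ (forall n, N (u n) <= N f) /\
      (forall b : R, (forall n, N (u n) <= b) -> N f <= b))).

(* Main.v *)
Require Import Defs.
From HB Require Import structures.
From mathcomp Require Import all_boot all_order all_algebra.
From mathcomp Require Import all_classical all_reals all_analysis.
Import Order.TTheory GRing.Theory Num.Theory numFieldNormedType.Exports.
Local Open Scope classical_set_scope.
Local Open Scope ring_scope.

Lemma meas_lvl (R : realType) (g : R -> R) (t : R) :
  measurable_fun setT g -> measurable [set x : R | t < `|g x|].
Proof.
move=> mg; have := measurableT_comp (@measurable_realfun.normr_measurable R setT) mg.
move=> /(_ measurableT `]t, +oo[%classic (measurable_itv _)).
suff -> : [set x : R | t < `|g x|] = setT `&` (Num.norm \o g) @^-1` `]t, +oo[%classic by [].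
by apply/seteqP; split=> x /=; rewrite in_itv /= andbT; [move=> ?; split | case].
Qed.

Lemma decr_le (R : realType) (f g : R -> R) :
  measurable_fun setT f -> measurable_fun setT g ->
  (forall x, `|g x| <= `|f x|) -> forall s, (decr_rearr g s <= decr_rearr f s)%E.
Proof.
move=> mf mg hgf s; rewrite /decr_rearr; apply: ereal_sup_le.
move=> _ [t /= ht <-]; exists t => //=.
apply: (lt_le_trans ht); apply: le_measure; rewrite ?inE.
- exact: meas_lvl.
- exact: meas_lvl.
- by move=> x /= /lt_le_trans; apply.
Qed.

From mathcomp Require Import zify ring lra.

Lemma sel_idx (R : realType) (s : nat -> R) (t : R) k :
  s 0%N <= t -> t <= s k.+1 -> exists j, (j <= k)%N /\ s j <= t /\ t <= s j.+1.
Proof.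
elim: k => [|k IH] h0 h1; first by exists 0%N.
have [hk|hk] := leP t (s k.+1).
  by have [j [jk hj]] := IH h0 hk; exists j; split => //; lia.
by exists k.+1; split => //; split => //; exact: ltW.
Qed.

Lemma powR_sum_le (R : realType) (A B q : R) : 0 <= A -> 0 <= B -> 0 <= q ->
  (A + B) `^ q <= 2 `^ q * (A `^ q + B `^ q).
Proof.
move=> A0 B0 q0.
wlog AB : A B A0 B0 / A <= B.
  move=> H; have [h|h] := leP A B; first exact: H.
  by rewrite addrC [A `^ q + _]addrC; apply: H => //; exact: ltW.
apply: (@le_trans _ _ ((2 * B) `^ q)).
  apply: ge0_ler_powR => //; rewrite ?nnegrE ?addr_ge0 ?mulr_ge0 //. 
  by rewrite mulr2n mulrDl mul1r lerD2r.
rewrite powRM // ler_wpM2l ?powR_ge0 // lerDr powR_ge0 //.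
Qed.

Lemma pow_inv_le (R : realType) (x S r : R) : 0 <= x -> 0 <= S -> 0 < r ->
  x `^ r <= S -> x <= S `^ r^-1.
Proof.
move=> x0 S0 r0 h.
have -> : x = (x `^ r) `^ r^-1 by rewrite -powRrM mulfV ?gt_eqF // powRr1.
by apply: ge0_ler_powR => //; rewrite ?nnegrE ?powR_ge0 // invr_ge0 ltW.
Qed.

Lemma la1 (R : realType) (S P W U : R) : S = P + W + U -> S / 2 <= P + W -> U <= S / 2.
Proof. move=> *; lra. Qed.
Lemma la2 (R : realType) (S P W U : R) : S = P + W + U -> 0 <= P -> 0 <= U -> W <= S.
Proof. move=> *; lra. Qed.
Lemma la3 (R : realType) (S : R) : 0 <= S -> S / 2 <= S.
Proof. move=> *; lra. Qed.
Lemma la4 (R : realType) (S x P : R) : x <= 2 * P -> P <= S / 2 -> x <= S.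
Proof. move=> *; lra. Qed.
Lemma la5 (R : realType) (T b c K0 : R) : b <= T -> c <= T -> 0 <= K0 -> K0 * (b + c) <= K0 * (2 * T).
Proof. move=> *; apply: ler_wpM2l => //; lra. Qed.
Lemma la6 (R : realType) (T A B K0 : R) : 1 <= K0 -> 0 <= T -> A <= T -> B <= K0 * (2 * T) ->
  K0 * (A + B) <= 3 * K0 ^+ 2 * T.
Proof.
move=> K1 T0 hA hB.
have h1 : K0 * T <= K0 ^+ 2 * T by rewrite expr2 -mulrA ler_peMl // mulr_ge0 //; lra.
have h2 : K0 * (A + B) <= K0 * (T + K0 * (2 * T)) by apply: ler_wpM2l; lra.
have h3 : K0 * (K0 * (2 * T)) = 2 * (K0 ^+ 2 * T) by rewrite expr2; ring.
move: h2; rewrite [X in _ <= X]mulrDr h3 => h2; lra.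
Qed.

Lemma natf (a j k : nat) : (j <= k)%N ->
  ((a + j).+1 <= a + k.+1)%N /\ (a <= a + j)%N /\ (a + j <= a + k.+1)%N /\
      ((a + j).+1 + (k - j) = a + k.+1)%N /\ (j < k.+1)%N /\ (k - j < k.+1)%N.
Proof. move=> *; repeat split; lia. Qed.

Definition G {R : realType} (g : nat -> R -> R) (p : R) a b x :=
  (\sum_(a <= i < b) `|g i x| `^ p) `^ p^-1.

Section Main.
Variables (R : realType) (X : set (R -> R)) (N : (R -> R) -> R).
Hypothesis hX : qB_ri_space X N.
Variables (p : R) (hp : 0 < p) (g : nat -> R -> R).
Hypothesis hg : forall i, X (g i).

Let mX : forall f, X f -> measurable_fun setT f.
Proof. by case: hX. Qed.

Lemma dom f (h : R -> R) : X f -> measurable_fun setT h -> (forall x, `|h x| <= `|f x|) ->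
  X h /\ N h <= N f.
Proof.
move=> Xf mh hf; case: hX => [_ [_ [_ [_ [_ [_ [_ [_ [_ [Hri _]]]]]]]]]].
apply: Hri => // s _; apply: decr_le => //; exact: mX.
Qed.

Lemma G_meas a b : measurable_fun setT (G g p a b).
Proof.
have h : measurable_fun setT (fun x => \sum_(a <= i < b) `|g i x| `^ p).
  apply: measurable_sum => i.
  have := measurableT_comp (@measurable_realfun.normr_measurable R setT) (mX _ (hg i)).
  by move/(measurableT_comp (measurable_realfun.measurable_powR p)).
exact: (measurableT_comp (measurable_realfun.measurable_powR p^-1) h).
Qed.

Lemma G_ge0 a b x : 0 <= G g p a b x.
Proof. exact: powR_ge0. Qed.

Lemma G_empty a : G g p a a = fun _ => 0.
Proof.
by apply/funext => x; rewrite /G big_geq // powR0 // invr_neq0 // gt_eqF.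
Qed.

Lemma G_single i x : G g p i i.+1 x = `|g i x|.
Proof.
by rewrite /G big_nat1 -powRrM mulfV ?gt_eqF // powRr1.
Qed.

Lemma G_split a m b x : (a <= m)%N -> (m <= b)%N ->
  G g p a b x <= 2 `^ p^-1 * (G g p a m x + G g p m b x).
Proof.
move=> am mb; rewrite /G (big_cat_nat am mb) /=.
apply: powR_sum_le; [apply: sumr_ge0 => *; exact: powR_ge0|apply: sumr_ge0 => *; exact: powR_ge0|by rewrite invr_ge0 ltW].
Qed.

Let XD f h : X f -> X h -> X (f \+ h).
Proof. by case: hX => [_ [_ [XD _]]]; apply: XD. Qed.
Let XZ (c : R) f : X f -> X (fun x => c * f x).
Proof. by case: hX => [_ [_ [_ [XZ _]]]]; apply: XZ. Qed.
Let X0 : X (fun _ => 0).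
Proof. by case: hX => [_ [X0 _]]. Qed.
Let NZ (c : R) f : X f -> N (fun x => c * f x) = `|c| * N f.
Proof. by case: hX => [_ [_ [_ [_ [_ [_ [NZ _]]]]]]]; apply: NZ. Qed.
Let Nge0 f : X f -> 0 <= N f.
Proof. by case: hX => [_ [_ [_ [_ [Nge0 _]]]]]; apply: Nge0. Qed.

Lemma N0 : N (fun _ => 0) = 0.
Proof.
have H := NZ 0 _ X0; rewrite normr0 [0 * N _]mul0r in H.
by move: H; rewrite mulr0.
Qed.

Lemma G1_in i : X (G g p i i.+1) /\ N (G g p i i.+1) <= N (g i).
Proof.
apply: dom => //; first exact: G_meas.
by move=> x; rewrite G_single normr_id.
Qed.

Lemma G_in a k : X (G g p a (a + k)).
Proof.
elim: k => [|k IH]; first by rewrite addn0 G_empty.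
have h : (a + k <= a + k.+1)%N by rewrite leq_add2l.
apply: (proj1 (@dom (fun x => 2 `^ p^-1 * (G g p a (a + k) \+ G g p (a + k) (a + k).+1) x) _ _ _ _)).
- apply: XZ; apply: XD => //; exact: (G1_in _).1.
- exact: G_meas.
- move=> x; rewrite !ger0_norm ?G_ge0 ?mulr_ge0 ?powR_ge0 ?addr_ge0 ?G_ge0 //.
  by rewrite addnS; apply: G_split => //; rewrite leq_addr.
Qed.

Lemma G_in' a b : (a <= b)%N -> X (G g p a b).
Proof. by move=> ab; rewrite -(subnKC ab); apply: G_in. Qed.

Variables (K : R) (K1 : 1 <= K).
Hypothesis HK : forall f h, X f -> X h -> N (f \+ h) <= K * (N f + N h).

Let K0 := 2 `^ p^-1 * K.

Lemma K0_ge1 : 1 <= K0.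
Proof.
have h2 : 1 <= 2 `^ p^-1 :> R.
  by rewrite -[X in X <= _](powRr0 2); apply: ler_powR; rewrite ?ler1n // invr_ge0 ltW.
by have := ler_pM ler01 ler01 h2 K1; rewrite mulr1.
Qed.

Lemma N_split a m b : (a <= m)%N -> (m <= b)%N ->
  N (G g p a b) <= K0 * (N (G g p a m) + N (G g p m b)).
Proof.
move=> am mb.
have Xam := G_in' a m am.
have Xmb := G_in' m b mb.
have XF : X (fun x => 2 `^ p^-1 * (G g p a m \+ G g p m b) x) by apply: XZ; apply: XD.
have pw : forall x, `|G g p a b x| <= `|2 `^ p^-1 * (G g p a m \+ G g p m b) x|.
  by move=> x; rewrite !ger0_norm ?G_ge0 ?mulr_ge0 ?powR_ge0 ?addr_ge0 ?G_ge0 //; apply: G_split.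
have [_ H] := @dom _ (G g p a b) XF (G_meas a b) pw.
apply: (le_trans H); rewrite NZ ?ger0_norm ?powR_ge0 //; last exact: XD.
by rewrite /K0 -mulrA ler_wpM2l ?powR_ge0 // HK.
Qed.

Variables (r : R) (r0 : 0 < r).
Hypothesis hL : (3 * K0 ^+ 2) `^ r <= 2.

Lemma aoki k : forall a, N (G g p a (a + k)) `^ r <= 2 * \sum_(a <= i < a + k) N (g i) `^ r.
Proof.
elim/ltn_ind: k => k IH a.
case: k IH => [|k] IH.
  by rewrite addn0 G_empty N0 powR0 ?gt_eqF // big_geq // mulr0.
set w := fun i => N (g i) `^ r.
set S := \sum_(a <= i < a + k.+1) w i.
have w0 : forall i, 0 <= w i by move=> i; exact: powR_ge0.
have S0 : 0 <= S by apply: sumr_ge0.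
have H0 : \sum_(a <= i < a + 0) w i <= S / 2 by rewrite addn0 big_geq // divr_ge0.
have H1 : S / 2 <= \sum_(a <= i < a + k.+1) w i by rewrite -/S; exact: la3.
have [j [jk [h1 h2]]] := @sel_idx R (fun j => \sum_(a <= i < a + j) w i) (S / 2) k H0 H1.
rewrite /= addnS in h2.
set m := (a + j)%N.
set pre := \sum_(a <= i < m) w i.
set suf := \sum_(m.+1 <= i < a + k.+1) w i.
have [n1 [n2 [n3 [E [n5 n6]]]]] := natf a _ _ jk.
have am1 : (a <= m.+1)%N by rewrite /m leqW // leq_addr.
have ES : S = pre + w m + suf.
  by rewrite /S (big_cat_nat am1 n1) big_nat_recr //= leq_addr.
have pre0 : 0 <= pre by apply: sumr_ge0.
have suf0 : 0 <= suf by apply: sumr_ge0.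
have h2' : S / 2 <= pre + w m.
  by move: h2; rewrite -/m big_nat_recr /= ?leq_addr.
have hsuf : suf <= S / 2 by exact: la1 ES h2'.
have wm : w m <= S by exact: la2 ES pre0 suf0.
have IHA := IH j n5 a.
have IHC := IH (k - j)%N n6 m.+1.
rewrite E -/suf in IHC; rewrite -/m -/pre in IHA.
have hB : N (G g p m m.+1) `^ r <= w m.
  rewrite /w; apply: ge0_ler_powR; [exact: ltW r0 | rewrite nnegrE; apply: Nge0; exact: (G1_in m).1
   | rewrite nnegrE; exact: Nge0 (hg m) | exact: (G1_in m).2].
set T := S `^ r^-1.
have T0 : 0 <= T by exact: powR_ge0.
have tA : N (G g p a m) <= T.
  apply: pow_inv_le => //; first by apply: Nge0; apply: G_in'.
  exact: la4 IHA h1.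
have tB : N (G g p m m.+1) <= T.
  apply: pow_inv_le => //; first by apply: Nge0; exact: (G1_in m).1.
  exact: le_trans hB wm.
have tC : N (G g p m.+1 (a + k.+1)) <= T.
  apply: pow_inv_le => //; first by apply: Nge0; apply: G_in'.
  exact: la4 IHC hsuf.
have s1 := @N_split m m.+1 (a + k.+1) (leqnSn _) n1.
have s2 := @N_split a m (a + k.+1) n2 n3.
have K01 := K0_ge1.
have K00 : 0 <= K0 by apply: le_trans K01.
have hB' : N (G g p m (a + k.+1)) <= K0 * (2 * T).
  exact: le_trans s1 (@la5 R _ _ _ _ tB tC K00).
have hA' : N (G g p a (a + k.+1)) <= 3 * K0 ^+ 2 * T.
  exact: le_trans s2 (@la6 R _ _ _ _ K01 T0 tA hB').
have hN0 : 0 <= N (G g p a (a + k.+1)) by apply: Nge0; apply: G_in'; rewrite leq_addr.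
have C0 : 0 <= 3 * K0 ^+ 2 by rewrite mulr_ge0 ?exprn_ge0.
apply: (@le_trans _ _ ((3 * K0 ^+ 2 * T) `^ r)).
  by apply: ge0_ler_powR; rewrite ?nnegrE ?(ltW r0) // mulr_ge0.
rewrite powRM //.
rewrite /T -powRrM mulVf ?gt_eqF // powRr1 //.
by apply: ler_wpM2r.
Qed.

End Main.

Theorem lemma6 (R : realType) (X : set (R -> R)) (N : (R -> R) -> R)
  (hX : qB_ri_space X N) (p : R) (hp : 0 < p) :
  exists (u c : R), 0 < u /\ u <= p /\
    forall (n : nat) (f : 'I_n -> R -> R), (forall i, X (f i)) ->
      let F := fun x => (\sum_(i < n) `|f i x| `^ p) `^ p^-1 in
      X F /\ N F <= c * (\sum_(i < n) N (f i) `^ u) `^ u^-1.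
Proof.
have hX' := hX.
case: hX' => [mX [X0 [XD [XZ [Nge0 [_ [NZ [[K [K1 HK]] _]]]]]]]].
have K01 := @K0_ge1 R p hp K K1.
set K0 := 2 `^ p^-1 * K in K01.
set L := 3 * K0 ^+ 2.
have L1 : 1 < L.
  rewrite /L; apply: (@lt_le_trans _ _ 3); first by rewrite ltr1n.
  by rewrite ler_peMr // expr_ge1 // (le_trans ler01).
have lnL : 0 < ln L by exact: ln_gt0.
have ln2 : 0 < ln (2 : R) by apply: ln_gt0; rewrite ltr1n.
set r := Order.min p (ln 2 / ln L).
have r0 : 0 < r by rewrite lt_min hp divr_gt0.
have hL : L `^ r <= 2.
  apply: (@le_trans _ _ (L `^ (ln 2 / ln L))).
    by apply: ler_powR; [exact: ltW | rewrite ge_min lexx orbT].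
  rewrite /powR ifF; last by apply/negbTE; rewrite gt_eqF // (lt_trans ltr01).
  by rewrite divfK ?gt_eqF // lnK // posrE ltr0n.
exists r, (2 `^ r^-1); split => //; split; first by rewrite ge_min lexx.
move=> n f hf F.
pose g := fun i : nat => match @insub _ (fun k => k < n)%N 'I_n i with Some j => f j | None => fun _ => 0 end.
have hg : forall i, X (g i) by move=> i; rewrite /g; case: insub.
have EF : F = G g p 0 n.
  apply/funext => x; rewrite /F /G big_mkord; congr (_ `^ _).
  by apply: eq_bigr => i _; rewrite /g valK.
rewrite EF; split; first exact: (@G_in' R X N hX p hp g hg 0 n).
have A := @aoki R X N hX p hp g hg K K1 HK r r0 hL n 0.
rewrite add0n big_mkord in A.
have ES : \sum_(i < n) N (g i) `^ r = \sum_(i < n) N (f i) `^ r.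
  by apply: eq_bigr => i _; rewrite /g valK.
rewrite ES in A.
have S0 : 0 <= \sum_(i < n) N (f i) `^ r by apply: sumr_ge0 => i _; exact: powR_ge0.
rewrite -powRM //.
have H1 : 0 <= N (G g p 0 n) by apply: Nge0; exact: (@G_in' R X N hX p hp g hg 0 n).
have H2 : 0 <= 2 * \sum_(i < n) N (f i) `^ r by rewrite mulr_ge0.
exact: (@pow_inv_le R _ _ r H1 H2 r0 A).
Qed.
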